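(* Let $R$ be a unital $K$-algebra, $J$ a locally f.d.ss ideal of $R$, and $T$ a finite dimensional semisimple subalgebra of $R$ with identity element $p := 1_T$ such that $R = T \oplus J$ as $K$-vector spaces. Then the following are equivalent: (a) $R$ is locally f.d.ss; (b) $pRp$ is locally f.d.ss; (c) for every idempotent $f \in pJp$ there is an idempotent $e \in pJp$ such that $f \in eJe$ and $e$ commutes with every element of $T$.
   Context: $K$ is a field. All algebras are associative $K$-algebras; ideals are two-sided ring ideals that are also $K$-subspaces. A $K$-algebra $R$ is locally f.d.ss if every finite subset of $R$ is contained in a subalgebra of $R$ that is a finite dimensional semisimple $K$-algebra. The identity $1_T$ of $T$ need not equal $1_R$. *)

(* Defs.v *)
From HB Require Import structures.
From mathcomp Require Import all_boot all_order all_algebra.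
Set Implicit Arguments. Unset Strict Implicit. Unset Printing Implicit Defensive.
Import GRing.Theory.
Local Open Scope ring_scope.

Section AlgDefs.
Variables (K : fieldType) (R : algType K).
Implicit Types (S A I : R -> Prop).

Definition subset_of S A : Prop := forall x, S x -> A x.

Definition subspace S : Prop :=
  S 0 /\ (forall x y, S x -> S y -> S (x + y)) /\ (forall (k : K) x, S x -> S (k *: x)).

(* (not necessarily unital) K-subalgebra: subspace closed under product *)
Definition subalgebra S : Prop :=
  subspace S /\ (forall x y, S x -> S y -> S (x * y)).

Definition ideal I : Prop :=
  subspace I /\ (forall r x, I x -> I (r * x)) /\ (forall r x, I x -> I (x * r)).

Definition fin_dim S : Prop :=
  exists b : seq R, (forall x, x \in b -> S x) /\
    forall x, S x -> exists c : 'I_(size b) -> K, x = \sum_(i < size b) c i *: b`_i.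

Definition ideal_in S I : Prop :=
  subset_of I S /\ subspace I /\
  (forall t x, S t -> I x -> I (t * x)) /\ (forall t x, S t -> I x -> I (x * t)).

Definition nilpotent_set I : Prop :=
  exists n : nat, (0 < n)%N /\
    forall s : seq R, size s = n -> (forall x, x \in s -> I x) -> \prod_(x <- s) x = 0.

(* finite dimensional semisimple subalgebra: finite dimensional and
   with no nonzero nilpotent ideal (zero radical) *)
Definition fdss S : Prop :=
  subalgebra S /\ fin_dim S /\
  forall I, ideal_in S I -> nilpotent_set I -> forall x, I x -> x = 0.

Definition locally_fdss A : Prop :=
  forall s : seq R, (forall x, x \in s -> A x) ->
    exists S, subset_of S A /\ fdss S /\ (forall x, x \in s -> S x).

Definition is_identity_of S (p : R) : Prop :=
  S p /\ forall t, S t -> p * t = t /\ t * p = t.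

Definition corner (a : R) A : R -> Prop := fun y => exists x, A x /\ y = a * x * a.

Definition idem_elt (e : R) : Prop := e * e = e.

Definition direct_sum_decomp (T J : R -> Prop) : Prop :=
  (forall r : R, exists t j, T t /\ J j /\ r = t + j) /\
  (forall x, T x -> J x -> x = 0).

End AlgDefs.

(* Main.v *)
Require Import Defs.
From HB Require Import structures.
From mathcomp Require Import all_boot all_order all_algebra.
From mathcomp Require Import ring.
From Stdlib Require Import ClassicalEpsilon Classical.
Import GRing.Theory.
Local Open Scope ring_scope.

Module Helpers.
Set Implicit Arguments. Unset Strict Implicit. Unset Printing Implicit Defensive.

Section Basics.
Variables (K : fieldType) (R : algType K).
Implicit Types (S A I Z : R -> Prop) (x y z : R).

Lemma sub0 S : subspace S -> S 0. Proof. by case. Qed.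
Lemma subD S x y : subspace S -> S x -> S y -> S (x + y).
Proof. by case=> _ [h _]; apply: h. Qed.
Lemma subZ S (k : K) x : subspace S -> S x -> S (k *: x).
Proof. by case=> _ [_ h]; apply: h. Qed.
Lemma subN S x : subspace S -> S x -> S (- x).
Proof. by move=> hS hx; rewrite -scaleN1r; apply: subZ. Qed.
Lemma subB S x y : subspace S -> S x -> S y -> S (x - y).
Proof. by move=> hS hx hy; apply: subD => //; apply: subN. Qed.
Lemma sub_sum S (I : Type) (r : seq I) (P : pred I) (F : I -> R) :
  subspace S -> (forall i, P i -> S (F i)) -> S (\sum_(i <- r | P i) F i).
Proof.
move=> hS hF; apply: (big_ind S) => //; first exact: sub0.
by move=> a b; apply: subD.
Qed.

Definition spanL (b : seq R) x :=
  exists c : nat -> K, x = \sum_(0 <= i < size b) c i *: b`_i.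

Lemma fin_dimP S : fin_dim S <->
  exists b, (forall x, x \in b -> S x) /\ forall x, S x -> spanL b x.
Proof.
split.
  case=> b [hb hS]; exists b; split => // x /hS [c ->].
  exists (fun i => oapp c 0 (insub i)); rewrite big_mkord.
  by apply: eq_bigr => i _; rewrite valK.
case=> b [hb hS]; exists b; split => // x /hS [c ->].
by exists (fun i => c i); rewrite big_mkord.
Qed.

Lemma spanL_in S b x : subspace S -> (forall y, y \in b -> S y) -> spanL b x -> S x.
Proof.
move=> hS hb [c ->]; apply: sub_sum => // i _; apply: subZ => //.
case: (ltnP i (size b)) => hi; first by apply: hb; rewrite mem_nth.
by rewrite nth_default //; apply: sub0.
Qed.

Lemma spanL_map (f : R -> R) b x :
  (forall u v, f (u + v) = f u + f v) -> (forall (k : K) u, f (k *: u) = k *: f u) ->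
  f 0 = 0 -> spanL b x -> spanL (map f b) (f x).
Proof.
move=> fD fZ f0 [c ->]; exists c; rewrite size_map.
rewrite (big_morph f fD f0); apply: eq_bigr => i _.
rewrite fZ; case: (ltnP i (size b)) => hi; first by rewrite (nth_map 0).
by rewrite !nth_default ?size_map // f0.
Qed.

Lemma spanL_cat b1 b2 x y : spanL b1 x -> spanL b2 y -> spanL (b1 ++ b2) (x + y).
Proof.
case=> c1 -> [c2 ->].
exists (fun i => if (i < size b1)%N then c1 i else c2 (i - size b1)%N).
rewrite size_cat [RHS](@big_cat_nat _ _ _ (size b1)) ?leq_addr //=; congr (_ + _).
  rewrite !big_nat; apply: eq_bigr => i /andP[_ hi].
  by rewrite hi nth_cat hi.
rewrite -{1}(add0n (size b1)) big_addn addKn.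
rewrite !big_nat; apply: eq_bigr => i _.
by rewrite ltnNge leq_addl /= addnK nth_cat ltnNge leq_addl /= addnK.
Qed.

Lemma spanL_scale b x (k : K) : spanL b x -> spanL b (k *: x).
Proof.
case=> c ->; exists (fun i => k * c i); rewrite scaler_sumr.
by apply: eq_bigr => i _; rewrite scalerA.
Qed.

End Basics.


Section Semiprime.
Variables (K : fieldType) (R : algType K).
Implicit Types (S A I Z : R -> Prop) (x y z : R).

Definition semiprime S := forall x, S x -> (forall s, S s -> x * s * x = 0) -> x = 0.

Lemma subM S x y : subalgebra S -> S x -> S y -> S (x * y).
Proof. by case=> _ h; apply: h. Qed.

Definition S1 S a := S a \/ a = 1.

Lemma S1M S a b : subalgebra S -> S1 S a -> S1 S b -> S1 S (a * b).
Proof.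
move=> hS [ha|->] [hb|->]; rewrite ?mulr1 ?mul1r; try by left.
  by left; apply: subM.
by right.
Qed.

Lemma S1M_in S a y : subalgebra S -> S1 S a -> S y -> S (a * y).
Proof. by move=> hS [ha|->] hy; rewrite ?mul1r //; apply: subM. Qed.
Lemma S1M_in' S a y : subalgebra S -> S1 S a -> S y -> S (y * a).
Proof. by move=> hS [ha|->] hy; rewrite ?mulr1 //; apply: subM. Qed.

Definition genI S x : R -> Prop := fun y =>
  exists l : seq (K * R * R), (forall t, t \in l -> S1 S t.1.2 /\ S1 S t.2) /\
    y = \sum_(t <- l) t.1.1 *: (t.1.2 * x * t.2).

Lemma lin_zero (f : R -> R) S x y :
  (forall u v, f (u + v) = f u + f v) -> (forall (k : K) u, f (k *: u) = k *: f u) ->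
  f 0 = 0 -> (forall a b, S1 S a -> S1 S b -> f (a * x * b) = 0) -> genI S x y -> f y = 0.
Proof.
move=> fD fZ f0 h [l [hl ->]]; rewrite (big_morph f fD f0) big_seq big1 // => t ht.
by rewrite fZ; case: (hl t ht) => h1 h2; rewrite h // scaler0.
Qed.

Lemma fdss_semiprime S : fdss S -> semiprime S.
Proof.
move=> [hS [hfd hN]] x hx hxsx.
have core : forall c1 c2, S1 S c1 -> S1 S c2 -> x * c1 * x * c2 * x = 0.
  move=> c1 c2 [h1|->] h2; first by rewrite (hxsx c1 h1) !mul0r.
  rewrite mulr1; case: h2 => [h2|->]; first by rewrite -!mulrA (mulrA x c2) (hxsx c2 h2) mulr0.
  by rewrite !mulr1 (hxsx x hx).
have hsub : subspace S by case: hS.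
have gen_in : forall l : seq (K * R * R), (forall t, t \in l -> S1 S t.1.2 /\ S1 S t.2) ->
    S (\sum_(t <- l) t.1.1 *: (t.1.2 * x * t.2)).
  move=> l hl; rewrite big_seq; apply: sub_sum => // t ht; apply: subZ => //.
  by case: (hl t ht) => ha hb; apply: (S1M_in' hS hb); apply: (S1M_in hS ha).
apply: (hN (genI S x)).
- split; first by move=> y [l [hl ->]]; apply: gen_in.
  split; first split.
  + by exists [::]; rewrite big_nil.
  + split.
      move=> y1 y2 [l1 [h1 ->]] [l2 [h2 ->]]; exists (l1 ++ l2); rewrite big_cat; split => //.
      by move=> t; rewrite mem_cat => /orP[]; [apply: h1|apply: h2].
    move=> k y [l [hl ->]]; exists (map (fun t => (k * t.1.1, t.1.2, t.2)) l).
    rewrite big_map scaler_sumr; split; last first.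
      by apply: eq_bigr => t _; rewrite /= scalerA.
    by move=> t /mapP [u hu ->] /=; apply: hl.
  split.
    move=> t y ht [l [hl ->]]; exists (map (fun u => (u.1.1, t * u.1.2, u.2)) l).
    rewrite big_map mulr_sumr; split; last first.
      by apply: eq_bigr => u _ /=; rewrite -scalerAr !mulrA.
    move=> u /mapP [v hv ->] /=; case: (hl v hv) => ha hb; split => //.
    by left; apply: S1M_in'.
  move=> t y ht [l [hl ->]]; exists (map (fun u => (u.1.1, u.1.2, u.2 * t)) l).
  rewrite big_map mulr_suml; split; last first.
    by apply: eq_bigr => u _ /=; rewrite -scalerAl !mulrA.
  move=> u /mapP [v hv ->] /=; case: (hl v hv) => ha hb; split => //.
  by left; apply: S1M_in.
- exists 3; split => // s hs hG.
  case: s hs hG => [|y1 [|y2 [|y3 []]]] //= _ hG.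
  rewrite !big_cons big_nil mulr1.
  have G1 := hG y1; have G2 := hG y2; have G3 := hG y3.
  rewrite !inE !eqxx ?orbT in G1 G2 G3.
  have lD : forall u : R, forall v w, u * (v + w) = u * v + u * w by move=> *; rewrite mulrDr.
  pose f1 := fun v => y1 * v.
  apply: (lin_zero (f := fun v => y1 * (y2 * v))) (G3 isT).
  + by move=> u v; rewrite !mulrDr.
  + by move=> k u; rewrite -!scalerAr.
  + by rewrite !mulr0.
  move=> a3 b3 h3a h3b.
  apply: (lin_zero (f := fun v => y1 * (v * (a3 * x * b3)))) (G2 isT).
  + by move=> u v; rewrite mulrDl mulrDr.
  + by move=> k u; rewrite -scalerAl -scalerAr.
  + by rewrite mul0r mulr0.
  move=> a2 b2 h2a h2b.
  apply: (lin_zero (f := fun v => (v * ((a2 * x * b2) * (a3 * x * b3))))) (G1 isT).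
  + by move=> u v; rewrite mulrDl.
  + by move=> k u; rewrite -scalerAl.
  + by rewrite mul0r.
  move=> a1 b1 h1a h1b.
  have -> : a1 * x * b1 * (a2 * x * b2 * (a3 * x * b3)) =
            a1 * (x * (b1 * a2) * x * (b2 * a3) * x) * b3 by rewrite !mulrA.
  by rewrite core ?mulr0 ?mul0r //; apply: S1M.
- by exists [:: (1, 1, 1)]; split; [move=> t; rewrite inE => /eqP -> /=; split; right|
    rewrite big_seq1 scale1r mulr1 mul1r].
Qed.
End Semiprime.

Section Semiprime2.
Variables (K : fieldType) (R : algType K).
Implicit Types (S A I Z N : R -> Prop) (x y z : R).

Lemma prodN S N (s : seq R) : ideal_in S N -> s != [::] ->
  (forall x, x \in s -> N x) -> N (\prod_(x <- s) x).
Proof.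
move=> [hNS [hN [hL hR]]]; elim: s => [//|x s IH] _ hs.
case: s IH hs => [|y s] IH hs.
  by rewrite big_seq1; apply: hs; rewrite inE.
rewrite big_cons; apply: hR; last by apply: hs; rewrite inE eqxx.
by apply: hNS; apply: IH => // u hu; apply: hs; rewrite inE hu orbT.
Qed.

Lemma semiprime_fdss S : subalgebra S -> fin_dim S -> semiprime S -> fdss S.
Proof.
move=> hS hfd hsp; split => //; split => // N hNi [m [m0 hm]] x hx.
pose P k := forall s : seq R, size s = k -> (forall x, x \in s -> N x) -> \prod_(x <- s) x = 0.
have step : forall k, (0 < k)%N -> P k.+1 -> P k.
  move=> k k0 hk s hs hN.
  have sne : s != [::] by apply/eqP => e; move: hs; rewrite e /= => e0; rewrite -e0 in k0.
  have zN := prodN hNi sne hN.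
  case: (hNi) => hNS [_ [hL _]].
  apply: hsp; first by apply: hNS.
  move=> t ht; rewrite -mulrA.
  have := hk (s ++ [:: t * \prod_(x <- s) x]).
  rewrite big_cat big_seq1 size_cat hs addn1; apply => // u.
  by rewrite mem_cat inE => /orP [/hN //|/eqP ->]; apply: hL.
have down : forall j, (j < m)%N -> P (m - j)%N.
  elim=> [|j IH] hj; first by rewrite subn0 => s; apply: hm.
  apply: step; first by rewrite subn_gt0.
  rewrite subnS prednK ?subn_gt0; first by apply: IH; apply: ltnW.
  by apply: ltn_trans hj.
have e1 : (m - m.-1 = 1)%N by case: (m) m0 => // m' _; rewrite /= subSnn.
have := down m.-1; rewrite e1 prednK // => /(_ (ltnSn _)) /(_ [:: x] erefl).
by rewrite big_seq1; apply => u; rewrite inE => /eqP ->.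
Qed.

Lemma fdssP S : fdss S <-> [/\ subalgebra S, fin_dim S & semiprime S].
Proof.
split; first by move=> h; case: (h) => a [b _]; split => //; apply: fdss_semiprime.
by case=> *; apply: semiprime_fdss.
Qed.
End Semiprime2.


Definition pb (P : Prop) : bool := if excluded_middle_informative P then true else false.
Lemma pbP (P : Prop) : reflect P (pb P).
Proof. by rewrite /pb; case: excluded_middle_informative => h; constructor. Qed.

Section Dim.
Variables (K : fieldType).

Definition vsub n (P : 'rV[K]_n -> Prop) :=
  P 0 /\ (forall u v, P u -> P v -> P (u + v)) /\ (forall (k : K) u, P u -> P (k *: u)).

Definition dimP n (P : 'rV[K]_n -> Prop) : nat :=
  \max_(r < n.+1 | pb (exists k (M : 'M[K]_(k, n)), (forall i, P (row i M)) /\ \rank M = r)) r.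

Lemma vsub_sum n (P : 'rV[K]_n -> Prop) m (F : 'I_m -> 'rV_n) :
  vsub P -> (forall i, P (F i)) -> P (\sum_i F i).
Proof.
case=> h0 [hD _] hF; apply: (big_ind P) => //.
Qed.

Lemma dimP_lt n (P Q : 'rV[K]_n -> Prop) c :
  vsub P -> (forall v, P v -> Q v) -> Q c -> ~ P c -> (dimP P < dimP Q)%N.
Proof.
move=> hP hPQ hc hnc; rewrite /dimP.
pose A := fun r : 'I_n.+1 => pb (exists k (M : 'M[K]_(k, n)), (forall i, P (row i M)) /\ \rank M = r).
have hcard : (0 < #|A|)%N.
  apply/card_gt0P; exists ord0; rewrite /A /in_mem /=; apply/pbP.
  by exists 0%N, 0; split; [case|rewrite mxrank0].
have [i0 hi0 ->] := @eq_bigmax_cond _ A (fun r : 'I_n.+1 => nat_of_ord r) hcard.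
move: hi0; rewrite /A /in_mem /= => /pbP [k [M [hrows hrk]]].
have ncM : ~~ (c <= M)%MS.
  apply/negP => /submxP [D hD]; apply: hnc; rewrite hD mulmx_sum_row.
  apply: vsub_sum => // i; case: hP => _ [_ hZ]; by apply: hZ.
have hlt : (\rank M < \rank (col_mx M c))%N.
  rewrite -(addsmxE M c).1.
  have : (M < M + c)%MS.
    rewrite ltmxE addsmxSl /=; apply/negP => h; case/negP: ncM.
    exact: submx_trans (addsmxSr M c) h.
  by rewrite ltmxErank => /andP [].
have hle : (\rank (col_mx M c) < n.+1)%N by rewrite ltnS rank_leq_col.
rewrite -hrk; apply: (leq_trans hlt).
apply: (@leq_bigmax_cond _ _ (fun r : 'I_n.+1 => nat_of_ord r) (Ordinal hle)).
apply/pbP; exists (k + 1)%N, (col_mx M c); split => // i.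
rewrite -(splitK i); case: (split i) => j /=.
  by rewrite rowKu; apply: hPQ.
by rewrite rowKd row_id.
Qed.
End Dim.


Section Brauer.
Variables (K : fieldType) (R : algType K).
Implicit Types (S A I Z N : R -> Prop) (x y z : R).

Definition coordv (b : seq R) (c : 'rV[K]_(size b)) : R := \sum_(i < size b) c 0 i *: b`_i.
Definition mu (b : seq R) Z := dimP (fun c : 'rV[K]_(size b) => Z (coordv c)).

Lemma coordv0 b : coordv (0 : 'rV_(size b)) = 0.
Proof. by rewrite /coordv big1 // => i _; rewrite mxE scale0r. Qed.
Lemma coordvD b (u v : 'rV_(size b)) : coordv (u + v) = coordv u + coordv v.
Proof. by rewrite /coordv -big_split; apply: eq_bigr => i _; rewrite mxE scalerDl. Qed.
Lemma coordvZ b k (u : 'rV_(size b)) : coordv (k *: u) = k *: coordv u.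
Proof. by rewrite /coordv scaler_sumr; apply: eq_bigr => i _; rewrite mxE scalerA. Qed.

Lemma mu_lt b Z' Z z : subspace Z' -> (forall v, Z' v -> Z v) -> Z z -> ~ Z' z ->
  spanL b z -> (mu b Z' < mu b Z)%N.
Proof.
move=> hZ' hsub hz hnz [c ec].
have e : coordv (\row_(i < size b) c i) = z.
  by rewrite ec /coordv big_mkord; apply: eq_bigr => i _; rewrite mxE.
apply: (@dimP_lt _ _ _ _ (\row_(i < size b) c i)); rewrite ?e //.
  split; first by rewrite coordv0; apply: sub0.
  split; first by move=> u v hu hv; rewrite coordvD; apply: subD.
  by move=> k u hu; rewrite coordvZ; apply: subZ.
by move=> v; apply: hsub.
Qed.

Definition rideal S Z := (forall z, Z z -> S z) /\ subspace Z /\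
  (forall z s, Z z -> S s -> Z (z * s)).

Lemma brauer S : subalgebra S -> fin_dim S -> semiprime S ->
  forall Z, rideal S Z -> (exists z, Z z /\ z <> 0) -> exists e, [/\ Z e, e * e = e & e <> 0].
Proof.
move=> hS /fin_dimP [b [hb hspan]] hsp.
suff : forall k Z, (mu b Z < k)%N -> rideal S Z -> (exists z, Z z /\ z <> 0) ->
  exists e, [/\ Z e, e * e = e & e <> 0].
  by move=> h Z; apply: (h (mu b Z).+1).
elim=> [//|k IH] Z hk hZ hnz.
case: (classic (exists Z', [/\ rideal S Z', (exists z, Z' z /\ z <> 0),
   (forall v, Z' v -> Z v) & (exists z, Z z /\ ~ Z' z)])).
  move=> [Z' [hZ' hnz' hsub [z [hz hnz'z]]]].
  have hlt : (mu b Z' < mu b Z)%N.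
    apply: (mu_lt (z := z)) => //; first by case: hZ' => _ [].
    by apply: hspan; case: hZ => h _; apply: h.
  have [e [he1 he2 he3]] := IH Z' (leq_trans hlt hk) hZ' hnz'.
  by exists e; split => //; apply: hsub.
move=> hmin.
have minZ : forall Z', rideal S Z' -> (exists z, Z' z /\ z <> 0) ->
    (forall v, Z' v -> Z v) -> forall z, Z z -> Z' z.
  move=> Z' h1 h2 h3 z hz; apply: NNPP => h4; apply: hmin; exists Z'; split => //.
  by exists z.
case: hZ => [hZS [hZsub hZr]].
case: hnz => [z [hz z0]].
have [s [hs hzsz]] : exists s, S s /\ z * s * z <> 0.
  apply: NNPP => h; apply: z0; apply: hsp; first by apply: hZS.
  by move=> s hs; apply: NNPP => h'; apply: h; exists s.
pose m := z * s.
have hm : Z m by apply: hZr.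
have mZ : Z (m * z) by apply: hZr => //; apply: hZS.
have [e [he eme]] : exists e, Z e /\ m = m * e.
  suff [w [hw ew]] : exists w, Z w /\ m = m * w by exists w.
  refine (minZ (fun y => exists w, Z w /\ y = m * w) _ _ _ m hm).
  - split.
      by move=> y [w [hw ->]]; apply: subM => //; apply: hZS.
    split.
      split; first by exists 0; rewrite mulr0; split => //; apply: sub0.
      split.
        by move=> y1 y2 [w1 [h1 ->]] [w2 [h2 ->]]; exists (w1 + w2); rewrite mulrDr; split => //; apply: subD.
      by move=> k0 y [w [h1 ->]]; exists (k0 *: w); rewrite scalerAr; split => //; apply: subZ.
    by move=> y t [w [h1 ->]] ht; exists (w * t); rewrite mulrA; split => //; apply: hZr.
  - by exists (m * z); split; [exists z|].
  - by move=> y [w [hw ->]]; apply: hZr => //; apply: hZS.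
have ann := minZ (fun y => Z y /\ m * y = 0).
have hee : Z (e * e) by apply: hZr => //; apply: hZS.
exists e; split => //.
  apply/eqP; rewrite -subr_eq0; apply/eqP; apply: NNPP => hne.
  have : Z z /\ m * z = 0.
    refine (ann _ _ _ z hz).
    - split; first by move=> y [hy _]; apply: hZS.
      split.
        split; first by split; [apply: sub0|rewrite mulr0].
        split.
          by move=> y1 y2 [h1 e1] [h2 e2]; split; [apply: subD|rewrite mulrDr e1 e2 addr0].
        by move=> k0 y [h1 e1]; split; [apply: subZ|rewrite -scalerAr e1 scaler0].
      by move=> y t [h1 e1] ht; split; [apply: hZr|rewrite mulrA e1 mul0r].
    - exists (e * e - e); split => //; split; first by apply: subB.
      by rewrite mulrBr mulrA -!eme subrr.
    - by move=> v [].
  by case => _ hmz; apply: hzsz.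
move=> e0; apply: hzsz; rewrite -/m; move: eme; rewrite e0 mulr0 => ->.
by rewrite mul0r.
Qed.

End Brauer.

Section KL.
Variables (K : fieldType) (R : algType K).
Implicit Types (S A I Z N : R -> Prop) (x y z : R).

Lemma KL0 S I : subalgebra S -> fin_dim S -> semiprime S -> ideal_in S I ->
  exists c, [/\ I c, c * c = c & forall x, I x -> c * x = x /\ x * c = x].
Proof.
move=> hS hfd hsp hI; have hfd' := hfd; move: hfd' => /fin_dimP [b [hb hspan]].
case: (hI) => hIS [hIsub [hIl hIr]].
pose Zv v := fun x => I x /\ v * x = 0.
have rZ : forall v, rideal S (Zv v).
  move=> v; split; first by move=> z [hz _]; apply: hIS.
  split.
    split; first by split; [apply: sub0|rewrite mulr0].
    split; first by move=> y1 y2 [h1 e1] [h2 e2]; split; [apply: subD|rewrite mulrDr e1 e2 addr0].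
    by move=> k y [h1 e1]; split; [apply: subZ|rewrite -scalerAr e1 scaler0].
  by move=> y t [h1 e1] ht; split; [apply: hIr|rewrite mulrA e1 mul0r].
have [v [hv vv hvl]] : exists v, [/\ I v, v * v = v & forall x, I x -> v * x = x].
  suff : forall k v, (mu b (Zv v) < k)%N -> I v -> v * v = v ->
      exists v, [/\ I v, v * v = v & forall x, I x -> v * x = x].
    by move=> h; apply: (h (mu b (Zv 0)).+1 0) => //; [apply: sub0|rewrite mulr0].
  elim=> [//|k IH] v hk hv vv.
  case: (classic (exists z, Zv v z /\ z <> 0)).
    move=> hnz; have [w [[hw vw] ww w0]] := brauer hS hfd hsp (rZ v) hnz.
    pose v' := v + w - w * v.
    have hwv : I (w * v) by apply: hIr => //; apply: hIS.
    have hv' : I v' by apply: subB => //; apply: subD.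
    have v'v : v' * v = v by rewrite /v' mulrBl mulrDl -mulrA vv addrK.
    have v'w : v' * w = w by rewrite /v' mulrBl mulrDl vw ww -mulrA vw mulr0 add0r subr0.
    have vv' : v * v' = v by rewrite /v' mulrBr mulrDr vw mulrA vw mul0r vv addr0 subr0.
    have v'v' : v' * v' = v'.
      by rewrite {2}/v' mulrBr mulrDr mulrA v'w v'v.
    apply: (IH v') => //.
    have hlt : (mu b (Zv v') < mu b (Zv v))%N.
      apply: (mu_lt (z := w)).
      - by case: (rZ v') => _ [].
      - by move=> x [hx ex]; split => //; rewrite -vv' -mulrA ex mulr0.
      - by [].
      - by move=> [_ e]; apply: w0; rewrite -v'w.
      - by apply: hspan; apply: hIS.
    by apply: leq_trans hlt hk.
  move=> hno; exists v; split => // x hx; apply/eqP; rewrite eq_sym -subr_eq0; apply/eqP.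
  apply: NNPP => hne; apply: hno; exists (x - v * x); split => //; split.
    by apply: subB => //; apply: hIl => //; apply: hIS.
  by rewrite mulrBr mulrA vv subrr.
exists v; split => // x hx; split; first by apply: hvl.
pose y := x - x * v.
have hy : I y by apply: subB => //; apply: hIr => //; apply: hIS.
have yv : y * v = 0 by rewrite /y mulrBl -mulrA vv subrr.
have y0 : y = 0.
  apply: hsp; first by apply: hIS.
  move=> s hs; have hsy : I (s * y) by apply: hIl.
  by rewrite -mulrA -(hvl _ hsy) mulrA yv mul0r.
by move: y0; rewrite /y => /eqP; rewrite subr_eq0 => /eqP e; rewrite -e.
Qed.

Lemma central_id S I c : ideal_in S I -> I c -> (forall x, I x -> c * x = x /\ x * c = x) ->
  forall s, S s -> c * s = s * c.
Proof.
move=> [hIS [hIsub [hIl hIr]]] hc hcid s hs.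
have cc : c * c = c by case: (hcid c hc).
have Sc : S c by apply: hIS.
have Ics : I (c * s) by apply: (hIr).
have Icsc : I (c * s * c) by apply: (hIr).
have e1 : c * s = c * s * c.
  have hx : I (c * s - c * s * c) by apply: subB.
  have := (hcid _ hx).2; rewrite mulrBl -(mulrA (c * s) c c) cc subrr => h.
  by apply/eqP; rewrite -subr_eq0 -h.
have e2 : s * c = c * s * c.
  have hx : I (s * c - c * s * c) by apply: subB => //; apply: (hIl).
  have := (hcid _ hx).1; rewrite mulrBr !mulrA cc subrr => h.
  by apply/eqP; rewrite -subr_eq0 -h.
by rewrite e1 e2.
Qed.
End KL.


Section Poly.
Variables (K : fieldType) (R : algType K).
Implicit Types (S A I Z N J : R -> Prop) (x y z : R).

Lemma hornerXC (f : R) (p : {poly K}) (c : K) :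
  horner_alg f (p * 'X + c%:P) = horner_alg f p * f + c *: 1.
Proof. by rewrite rmorphD rmorphM /= horner_algX horner_algC. Qed.

Lemma hact_l (f y : R) (p : {poly K}) : f * y = y -> horner_alg f p * y = p.[1] *: y.
Proof.
move=> hf; elim/poly_ind: p => [|p c IH]; first by rewrite rmorph0 mul0r horner0 scale0r.
rewrite hornerXC mulrDl -mulrA hf IH hornerMXaddC mulr1 scalerDl.
by rewrite -scalerAl mul1r.
Qed.

Lemma hact_r (f y : R) (p : {poly K}) : y * f = y -> y * horner_alg f p = p.[1] *: y.
Proof.
move=> hf; elim/poly_ind: p => [|p c IH]; first by rewrite rmorph0 mulr0 horner0 scale0r.
rewrite hornerXC mulrDr mulrA IH -scalerAl hf hornerMXaddC mulr1 scalerDl.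
by rewrite -scalerAr mulr1.
Qed.

Lemma hcomm (f : R) (p : {poly K}) : horner_alg f p * f = f * horner_alg f p.
Proof.
by rewrite -[X in _ * X = _](horner_algX f) -[X in _ = X * _](horner_algX f) -!rmorphM /= mulrC.
Qed.

Lemma PT_core J (f r : R) (Pf : {poly K}) :
  ideal J -> J f -> Pf != 0 -> root Pf 0 -> horner_alg f Pf = 0 ->
  r * f = f -> f * r = f ->
  exists e, [/\ J e, e * e = e, r * e * r = e &
    forall y, (f * y = y -> e * y = y) /\ (y * f = y -> y * e = y)].
Proof.
move=> hJ hf Pf0 rP0 hP rf fr.
have [m [q hq1 hPq]] := multiplicity_XsubC Pf 1.
rewrite Pf0 /= in hq1.
case: m hPq => [|m] hPq.
  exists 0; split; rewrite ?mulr0 ?mul0r //; first by case: hJ => hs _; apply: sub0.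
  have hP1 : Pf.[1] != 0 by rewrite hPq expr0 mulr1.
  split => hy.
    by have := hact_l Pf hy; rewrite hP ?mul0r ?mulr0 => /esym /eqP; rewrite scaler_eq0 (negbTE hP1) /= => /eqP.
  by have := hact_r Pf hy; rewrite hP ?mul0r ?mulr0 => /esym /eqP; rewrite scaler_eq0 (negbTE hP1) /= => /eqP.
set Xm := ('X - 1%:P) ^+ m.+1 in hPq.
have cop : coprimep q Xm by apply: coprimep_expr; rewrite coprimep_XsubC.
have [[U1 U2] /= hU] := Bezout_coprimepP _ _ cop.
move: hU; rewrite -size_poly_eq1 => /size_poly1P [c c0 hc].
pose C := (c^-1)%:P.
pose W := C * U1 * q.
have CC : C * c%:P = 1 by rewrite -polyCM mulVf.
have hW1 : W - 1 = - (C * U2 * Xm).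
  rewrite /W -CC -hc; ring.
have hWW : W * W - W = Pf * (- (C * C * U1 * U2)).
  have -> : W * W - W = W * (W - 1) by ring.
  by rewrite hW1 hPq /W; ring.
have hq0 : q.[0] = 0.
  move: rP0; rewrite /root hPq hornerM /Xm horner_exp hornerXsubC sub0r.
  rewrite mulf_eq0 expf_eq0 oppr_eq0 oner_eq0 andbF orbF => /eqP //.
have [W' hW'] : exists W', W = W' * 'X.
  have : root W 0 by rewrite /root /W hornerM hq0 mulr0.
  by move/factor_theorem => [W' ->]; exists W'; rewrite subr0.
pose e := horner_alg f W.
have ee : e * e = e.
  apply/eqP; rewrite -subr_eq0; apply/eqP.
  by rewrite /e -rmorphM -rmorphB /= hWW rmorphM /= hP mul0r.
have e1 : e = horner_alg f W' * f by rewrite /e hW' rmorphM /= horner_algX.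
have e2 : e = f * horner_alg f W' by rewrite e1 hcomm.
have W1 : W.[1] = 1.
  have : (W - 1).[1] = 0 by rewrite hW1 hornerN hornerM /Xm horner_exp hornerXsubC subrr expr0n mulr0 oppr0.
  move=> h; apply/eqP; rewrite -subr_eq0; apply/eqP; rewrite -h.
  by rewrite !hornerE.
exists e; split => //.
- by rewrite e1; case: hJ => _ [hl _]; apply: hl.
- by rewrite {1}e2 mulrA rf -e2 e1 -mulrA fr.
- move=> y; split => hy.
    by rewrite /e hact_l // W1 scale1r.
  by rewrite /e hact_r // W1 scale1r.
Qed.
End Poly.

Section Alg.
Variables (K : fieldType) (R : algType K).
Implicit Types (S A I Z N J : R -> Prop) (x y z : R).

Lemma alg_exists S f : subalgebra S -> fin_dim S -> S f ->
  exists Pf : {poly K}, [/\ Pf != 0, root Pf 0 & horner_alg f Pf = 0].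
Proof.
move=> hS /fin_dimP [b [hb hspan]] hf.
set n := size b.
have hpow : forall k, S (f ^+ k.+1).
  elim=> [|k IH]; first by rewrite expr1.
  by rewrite exprS; apply: subM.
have hc : forall k, {c : nat -> K | f ^+ k.+1 = \sum_(0 <= i < n) c i *: b`_i}.
  by move=> k; apply: constructive_indefinite_description; apply: hspan.
pose M := \matrix_(k < n.+1, i < n) sval (hc k) i.
have hM : forall k : 'I_n.+1, f ^+ k.+1 = \sum_(i < n) M k i *: b`_i.
  move=> k; rewrite (svalP (hc k)) big_mkord; apply: eq_bigr => i _; by rewrite mxE.
have kn0 : kermx M != 0.
  rewrite kermx_eq0 /row_free; apply/negP => /eqP h.
  by have := rank_leq_col M; rewrite h ltnn.
have [v /sub_kermxP vM v0] := rowV0Pn kn0.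
pose Pf := \sum_(k < n.+1) v 0 k *: 'X^(k.+1).
exists Pf; split.
- apply: contraNneq v0 => P0; apply/eqP/rowP => k; rewrite !mxE.
  have := congr1 (fun p : {poly K} => p`_k.+1) P0; rewrite coef0 coef_sum => <-.
  rewrite (bigD1 k) //= big1 ?addr0; first by rewrite coefZ coefXn eqxx mulr1.
  move=> j hj; rewrite coefZ coefXn eqSS.
  by rewrite (_ : (k == j :> nat) = false) ?mulr0 //; apply/negbTE; rewrite eq_sym.
- rewrite /root /Pf horner_sum; apply/eqP; apply: big1 => k _.
  by rewrite hornerZ hornerXn expr0n /= mulr0.
- rewrite /Pf rmorph_sum /=.
  under eq_bigr => k _ do rewrite linearZ /= rmorphXn /= horner_algX hM mulr_algl scaler_sumr.
  rewrite exchange_big /= big1 // => i _.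
  under eq_bigr => k _ do rewrite scalerA.
  rewrite -scaler_suml.
  have -> : \sum_(k < n.+1) v 0 k * M k i = (v *m M) 0 i by rewrite mxE.
  by rewrite vM mxE scale0r.
Qed.
End Alg.


Section Corner.
Variables (K : fieldType) (R : algType K).
Implicit Types (S A I Z N J T : R -> Prop) (x y z : R).

Lemma corner_fdss S e : fdss S -> S e -> e * e = e -> fdss (corner e S).
Proof.
move=> /fdssP [hS hfd hsp] he ee; have hsub : subspace S by case: hS.
have cS : forall x, corner e S x -> S x.
  by move=> x [a [ha ->]]; apply: subM => //; apply: subM.
have cE : forall x, corner e S x -> e * x = x /\ x * e = x.
  by move=> x [a [ha ->]]; split; [rewrite !mulrA ee|rewrite -mulrA ee].
apply/fdssP; split.
- split; first split.
  + by exists 0; rewrite mulr0 mul0r; split => //; apply: sub0.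
  + split.
      move=> x y [a [ha ->]] [c [hc ->]]; exists (a + c); split; first by apply: subD.
      by rewrite mulrDr mulrDl.
    move=> k x [a [ha ->]]; exists (k *: a); split; first by apply: subZ.
    by rewrite -scalerAr -scalerAl.
  + move=> x y [a [ha ->]] [c [hc ->]]; exists (a * e * c); split.
      by apply: subM => //; apply: subM.
    by rewrite !mulrA -(mulrA (e * a) e e) ee.
- apply/fin_dimP; have /fin_dimP [b [hb hspan]] := hfd.
  exists (map (fun z => e * z * e) b); split.
    by move=> x /mapP [y hy ->]; exists y; split => //; apply: hb.
  move=> x [a [ha ->]]; apply: (spanL_map (f := fun z => e * z * e)).
  + by move=> u v; rewrite mulrDr mulrDl.
  + by move=> k u; rewrite -scalerAr -scalerAl.
  + by rewrite mulr0 mul0r.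
  + by apply: hspan.
- move=> x hx hxsx; apply: hsp; first by apply: cS.
  move=> s hs; have [ex xe] := cE x hx.
  have -> : x * s * x = x * (e * s * e) * x by rewrite -{1}xe -{2}ex !mulrA.
  by apply: hxsx; exists s.
Qed.

Lemma core_c J T p S f :
  ideal J -> is_identity_of T p -> fdss S -> S p -> (forall t, T t -> S t) ->
  S f -> J f -> p * f = f -> f * p = f ->
  exists e, [/\ idem_elt e, corner p J e, corner e J f & forall t, T t -> e * t = t * e].
Proof.
move=> hJ [hTp hpid] hfS hSp hTS hf hJf pf fp.
have [pp _] := hpid p hTp.
have /fdssP [hS hfd hsp] := hfS.
pose I := fun x => S x /\ J x.
have hI : ideal_in S I.
  case: hJ => hJs [hJl hJr]; case: (hS) => hSs hSm.
  split; first by move=> x [].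
  split; first split.
  - by split; [apply: sub0|apply: sub0].
  - by split; [move=> x y [? ?] [? ?]; split; apply: subD|move=> k x [? ?]; split; apply: subZ].
  split; first by move=> t x ht [hx hjx]; split; [apply: hSm|apply: hJl].
  by move=> t x ht [hx hjx]; split; [apply: hSm|apply: hJr].
have [c [[hcS hcJ] cc hcid]] := KL0 hS hfd hsp hI.
have cen := central_id hI (conj hcS hcJ) hcid.
have pc : p * c = c * p by apply/esym/cen.
exists (c * p); split.
- by rewrite /idem_elt mulrA -(mulrA c p c) pc mulrA cc -mulrA pp.
- by exists c; split => //; rewrite pc -mulrA pp.
- exists f; split => //.
  have [cf fc] := hcid f (conj hf hJf).
  by rewrite -(mulrA c p f) pf cf mulrA fc fp.
- move=> t ht; have [pt tp] := hpid t ht.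
  by rewrite -mulrA pt mulrA -(cen t (hTS t ht)) -mulrA tp.
Qed.

End Corner.


Section Main.
Variables (K : fieldType) (R : algType K).
Implicit Types (S A I Z N J T : R -> Prop) (x y z : R).

Lemma decomp_list T J (s : seq R) : direct_sum_decomp T J ->
  exists X : seq R, (forall x, x \in X -> J x) /\
    forall r, r \in s -> exists t j, [/\ T t, j \in X & r = t + j].
Proof.
move=> [hd _]; elim: s => [|r s IH].
  by exists [::]; split.
have [X [hX hs]] := IH.
have [t [j [ht [hj er]]]] := hd r.
exists (j :: X); split.
  by move=> x; rewrite inE => /orP [/eqP ->|/hX].
move=> r'; rewrite inE => /orP [/eqP ->|/hs [t' [j' [h1 h2 h3]]]].
  by exists t, j; split => //; rewrite inE eqxx.
by exists t', j'; split => //; rewrite inE h2 orbT.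
Qed.

Lemma ideal_self S : subalgebra S -> ideal_in S S.
Proof. by move=> hS; split => //; split; [case: hS|split => *; apply: subM]. Qed.

Lemma local_unit J (X : seq R) : locally_fdss J -> (forall x, x \in X -> J x) ->
  exists g, J g /\ forall x, x \in X -> g * x = x /\ x * g = x.
Proof.
move=> hJl hXJ.
have [S0 [hS0J [hS0 hX]]] := hJl X hXJ.
have /fdssP [hS hfd hsp] := hS0.
have [g [hg gg hgid]] := KL0 hS hfd hsp (ideal_self hS).
by exists g; split; [apply: hS0J|move=> x /hX; apply: hgid].
Qed.

Lemma idem_from J (r g : R) : ideal J -> locally_fdss J -> J g -> r * r = r ->
  exists e, [/\ J e, e * e = e, r * e * r = e &
    forall y, (g * y = y -> r * y = y -> e * y = y) /\ (y * g = y -> y * r = y -> y * e = y)].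
Proof.
move=> hJ hJl hg rr.
pose f := r * g * r.
have hf : J f by case: hJ => _ [hl hr]; apply: hr; apply: hl.
have hfl : forall x, x \in [:: f] -> J x by move=> x; rewrite inE => /eqP ->.
have [S1 [hS1J [hS1 hS1f]]] := hJl [:: f] hfl.
have /fdssP [hS hfd _] := hS1.
have [Pf [P0 rP hP]] := alg_exists hS hfd (hS1f f (mem_head _ _)).
have rf : r * f = f by rewrite /f !mulrA rr.
have fr : f * r = f by rewrite /f -mulrA rr.
have [e [he ee ere hey]] := PT_core hJ hf P0 rP hP rf fr.
exists e; split => // y; split => h1 h2.
  by apply: (hey y).1; rewrite /f -!mulrA h2 h1 h2.
by apply: (hey y).2; rewrite /f !mulrA h2 h1 h2.
Qed.

Lemma c_a J T p : ideal J -> locally_fdss J -> fdss T -> is_identity_of T p ->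
  direct_sum_decomp T J ->
  (forall f : R, idem_elt f -> corner p J f ->
     exists e : R, [/\ idem_elt e, corner p J e, corner e J f &
                      forall t, T t -> e * t = t * e]) ->
  locally_fdss (fun _ : R => True).
Proof.
move=> hJ hJl hT [hTp hpid] hdec hc s _.
have [pp _] := hpid p hTp.
have [hJsub [hJlm hJrm]] := hJ.
have [X [hXJ hXs]] := decomp_list s hdec.
pose q := 1 - p.
have pq : p * q = 0 by rewrite /q mulrBr mulr1 pp subrr.
have qp : q * p = 0 by rewrite /q mulrBl mul1r pp subrr.
have qq : q * q = q by rewrite /q mulrBr mulr1 -/q qp subr0.
have pqx : forall x, p * x + q * x = x by move=> x; rewrite -mulrDl /q addrC subrK mul1r.
have xpq : forall x, x * p + x * q = x by move=> x; rewrite -mulrDr /q addrC subrK mulr1.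
pose X' := X ++ map (fun x => p * x) X ++ map (fun x => x * p) X ++
   map (fun x => q * x) X ++ map (fun x => x * q) X.
have hX'J : forall x, x \in X' -> J x.
  move=> x; rewrite !mem_cat => /or4P [/hXJ //|/mapP [y /hXJ hy ->]|/mapP [y /hXJ hy ->]|
    /orP [/mapP [y /hXJ hy ->]|/mapP [y /hXJ hy ->]]]; by [apply: hJlm|apply: hJrm].
have [g [hg hgX]] := local_unit hJl hX'J.
have gpx : forall x, x \in X -> g * (p * x) = p * x.
  by move=> x hx; apply: (hgX _ _).1; rewrite !mem_cat (map_f (fun y => p * y) hx) ?orbT.
have xpg : forall x, x \in X -> (x * p) * g = x * p.
  by move=> x hx; apply: (hgX _ _).2; rewrite !mem_cat (map_f (fun y => y * p) hx) ?orbT.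
have gqx : forall x, x \in X -> g * (q * x) = q * x.
  by move=> x hx; apply: (hgX _ _).1; rewrite !mem_cat (map_f (fun y => q * y) hx) ?orbT.
have xqg : forall x, x \in X -> (x * q) * g = x * q.
  by move=> x hx; apply: (hgX _ _).2; rewrite !mem_cat (map_f (fun y => y * q) hx) ?orbT.
have [eps [heps epseps pepsp hepsy]] := idem_from hJ hJl hg pp.
have epspx : forall x, x \in X -> eps * (p * x) = p * x.
  by move=> x hx; apply: (hepsy _).1; [apply: gpx|rewrite mulrA pp].
have xpeps : forall x, x \in X -> (x * p) * eps = x * p.
  by move=> x hx; apply: (hepsy _).2; [apply: xpg|rewrite -mulrA pp].
have [e [ee [j1 [hj1 ej1]] [j2 [hj2 epsj2]] ecom]] :
    exists e : R, [/\ idem_elt e, corner p J e, corner e J eps &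
                      forall t, T t -> e * t = t * e].
  by apply: hc => //; exists eps; split => //; rewrite pepsp.
have pe : p * e = e by rewrite ej1 !mulrA pp.
have ep : e * p = e by rewrite ej1 -mulrA pp.
have eeps : e * eps = eps by rewrite epsj2 !mulrA ee.
have epse : eps * e = eps by rewrite epsj2 -mulrA ee.
have epx : forall x, x \in X -> e * (p * x) = p * x.
  by move=> x hx; rewrite -(epspx x hx) mulrA eeps.
have xpe : forall x, x \in X -> (x * p) * e = x * p.
  by move=> x hx; rewrite -(xpeps x hx) -mulrA epse.
have [h [hh hhh qhq hhy]] := idem_from hJ hJl hg qq.
have qh : q * h = h by rewrite -qhq !mulrA qq.
have hq : h * q = h by rewrite -qhq -mulrA qq.
have hqx : forall x, x \in X -> h * (q * x) = q * x.
  by move=> x hx; apply: (hhy _).1; [apply: gqx|rewrite mulrA qq].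
have xqh : forall x, x \in X -> (x * q) * h = x * q.
  by move=> x hx; apply: (hhy _).2; [apply: xqg|rewrite -mulrA qq].
pose E := e + h.
have eh : e * h = 0 by rewrite -ep -qh mulrA -(mulrA e p q) pq mulr0 mul0r.
have he : h * e = 0 by rewrite -hq -pe mulrA -(mulrA h q p) qp mulr0 mul0r.
have EE : E * E = E by rewrite /E mulrDl !mulrDr ee eh he hhh addr0 add0r.
have he' : J e by rewrite ej1; apply: hJrm; apply: hJlm.
have hE : J E by apply: subD.
have Ecom : forall t, T t -> E * t = t * E.
  move=> t ht; have [pt tp] := hpid t ht.
  have qt : q * t = 0 by rewrite /q mulrBl mul1r pt subrr.
  have tq : t * q = 0 by rewrite /q mulrBr mulr1 tp subrr.
  rewrite /E mulrDl mulrDr ecom //.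
  have ht0 : h * t = 0 by rewrite -hq -mulrA qt mulr0.
  have th0 : t * h = 0 by rewrite -qh mulrA tq mul0r.
  by rewrite ht0 th0.
have EX : forall x, x \in X -> E * x = x /\ x * E = x.
  move=> x hx; split.
    by rewrite /E mulrDl -ep -hq -!mulrA epx // hqx // pqx.
  by rewrite /E mulrDr -pe -qh !mulrA xpe // xqh // xpq.
have /fdssP [hTa hTfd hTsp] := hT.
have hTsub : subspace T by case: hTa.
have /fin_dimP [tb [htb htbspan]] := hTfd.
pose L := X ++ E :: map (fun t => t * E) tb.
have hLJ : forall x, x \in L -> J x.
  move=> x; rewrite mem_cat inE => /or3P [/hXJ //|/eqP -> //|/mapP [t _ ->]].
  by apply: hJlm.
have [S2 [hS2J [hS2 hS2L]]] := hJl L hLJ.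
have S2E : S2 E by apply: hS2L; rewrite mem_cat inE eqxx orbT.
pose A := corner E S2.
have hA : fdss A := corner_fdss hS2 S2E EE.
have /fdssP [hAa hAfd hAsp] := hA.
have hAsub : subspace A by case: hAa.
have AE : forall a, A a -> E * a = a /\ a * E = a.
  by move=> a [z [hz ->]]; split; [rewrite !mulrA EE|rewrite -mulrA EE].
have AJ : forall a, A a -> J a.
  by move=> a [z [hz ->]]; apply: hJrm; apply: hJlm; apply: hS2J.
have XA : forall x, x \in X -> A x.
  move=> x hx; exists x; split; first by apply: hS2L; rewrite mem_cat hx.
  by have [e1 e2] := EX x hx; rewrite e1 e2.
have tEA : forall t, T t -> A (t * E).
  move=> t ht; apply: (spanL_in hAsub (b := map (fun t => t * E) tb)).
    move=> z /mapP [t' ht' ->]; exists (t' * E); split.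
      by apply: hS2L; rewrite mem_cat inE (map_f (fun y => y * E) ht') ?orbT.
    by rewrite mulrA (Ecom t' (htb t' ht')) -!mulrA EE EE.
  apply: (spanL_map (f := fun z => z * E)).
  + by move=> u v; rewrite mulrDl.
  + by move=> k u; rewrite -scalerAl.
  + by rewrite mul0r.
  + by apply: htbspan.
pose B := fun y => exists t a, [/\ T t, A a & y = t + a].
exists B; split => //; split; last first.
  move=> r hr; have [t [j [ht hj ->]]] := hXs r hr.
  by exists t, j; split => //; apply: XA.
apply/fdssP; split.
- split; first split.
  + by exists 0, 0; rewrite addr0; split => //; apply: sub0.
  + split.
      move=> y1 y2 [t1 [a1 [h1 h1' ->]]] [t2 [a2 [h2 h2' ->]]].
      by exists (t1 + t2), (a1 + a2); rewrite addrACA; split => //; apply: subD.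
    move=> k y [t1 [a1 [h1 h1' ->]]].
    by exists (k *: t1), (k *: a1); rewrite scalerDr; split => //; apply: subZ.
  + move=> y1 y2 [t1 [a1 [h1 h1' ->]]] [t2 [a2 [h2 h2' ->]]].
    exists (t1 * t2), (t1 * a2 + (a1 * t2 + a1 * a2)); split.
    * by apply: subM.
    * apply: subD => //; first by rewrite -(AE a2 h2').1 mulrA; apply: (subM hAa (tEA _ h1) h2').
      apply: subD => //; last by apply: subM.
      by rewrite -(AE a1 h1').2 -mulrA Ecom //; apply: (subM hAa h1' (tEA _ h2)).
    * by rewrite mulrDl !mulrDr !addrA.
- apply/fin_dimP; have /fin_dimP [bA [hbA hbAspan]] := hAfd.
  exists (tb ++ bA); split.
    move=> x; rewrite mem_cat => /orP [/htb hx|/hbA hx].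
      by exists x, 0; rewrite addr0; split => //; apply: sub0.
    by exists 0, x; rewrite add0r; split => //; apply: sub0.
  by move=> y [t [a [ht ha ->]]]; apply: spanL_cat; [apply: htbspan|apply: hbAspan].
- move=> y [t [a [ht ha ->]]] hy0.
  have t0 : t = 0.
    apply: hTsp => // t' ht'.
    have := hy0 t' (ex_intro _ t' (ex_intro _ 0 (And3 ht' (sub0 hAsub) (esym (addr0 t'))))).
    have -> : (t + a) * t' * (t + a) = t * t' * t + (t * t' * a + a * t' * (t + a)).
      by rewrite !mulrDl mulrDr !addrA.
    move=> /eqP; rewrite addr_eq0 => /eqP e0.
    apply: hdec.2; first by apply: subM => //; apply: subM.
    rewrite e0; apply: subN; first by case: hJ.
    by apply: subD => //; [apply: (hJlm); apply: AJ|apply: (hJrm); apply: (hJrm); apply: AJ].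
  rewrite t0 add0r; apply: hAsp => // a' ha'.
  have := hy0 a' (ex_intro _ 0 (ex_intro _ a' (And3 (sub0 hTsub) ha' (esym (add0r a'))))).
  by rewrite t0 add0r.
Qed.

End Main.


Section Final.
Variables (K : fieldType) (R : algType K).
Implicit Types (S A I Z N J T : R -> Prop) (x y z : R).

Lemma a_b T p : is_identity_of T p ->
  locally_fdss (fun _ : R => True) -> locally_fdss (corner p (fun _ : R => True)).
Proof.
move=> [hTp hpid] ha s hs; have [pp _] := hpid p hTp.
have [S [_ [hS hsS]]] := ha (p :: s) (fun _ _ => I).
exists (corner p S); split; [|split].
- by move=> x [z [_ ->]]; exists z.
- by apply: (corner_fdss hS _ pp); apply: hsS; rewrite mem_head.
- move=> x hx; have [z [_ ez]] := hs x hx; exists x; split.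
    by apply: hsS; rewrite inE hx orbT.
  by rewrite ez !mulrA pp -!mulrA pp.
Qed.

Lemma b_c J T p : ideal J -> fdss T -> is_identity_of T p ->
  locally_fdss (corner p (fun _ : R => True)) ->
  (forall f : R, idem_elt f -> corner p J f ->
     exists e : R, [/\ idem_elt e, corner p J e, corner e J f &
                      forall t, T t -> e * t = t * e]).
Proof.
move=> hJ hT hp hb f hf [j [hj ef]].
have [hTp hpid] := hp; have [pp _] := hpid p hTp.
have /fdssP [_ hTfd _] := hT.
have /fin_dimP [tb [htb htbspan]] := hTfd.
have hl : forall x, x \in f :: p :: tb -> corner p (fun _ : R => True) x.
  move=> x; rewrite !inE => /or3P [/eqP ->|/eqP ->|/htb hx].
  - by exists j.
  - by exists p; rewrite !pp.
  - by exists x; have [e1 e2] := hpid x hx; rewrite e1 e2.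
have [S [_ [hS hsS]]] := hb _ hl.
have /fdssP [hSa _ _] := hS.
have hSsub : subspace S by case: hSa.
have pf : p * f = f by rewrite ef !mulrA pp.
have fp : f * p = f by rewrite ef -mulrA pp.
have Jf : J f by rewrite ef; case: hJ => _ [hl' hr']; apply: hr'; apply: hl'.
apply: (core_c hJ hp hS) => //.
- by apply: hsS; rewrite !inE eqxx orbT.
- move=> t ht; apply: (spanL_in hSsub (b := tb)); last by apply: htbspan.
  by move=> y hy; apply: hsS; rewrite !inE hy !orbT.
- by apply: hsS; rewrite mem_head.
Qed.

End Final.

End Helpers.
Import Helpers.

Theorem corollary4p3 (K : fieldType) (R : algType K)
  (J T : R -> Prop) (p : R) :
  ideal J -> locally_fdss J ->
  fdss T -> is_identity_of T p ->
  direct_sum_decomp T J ->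
  [/\ (locally_fdss (fun _ : R => True) <-> locally_fdss (corner p (fun _ : R => True))),
      (locally_fdss (corner p (fun _ : R => True)) <->
         (forall f : R, idem_elt f -> corner p J f ->
            exists e : R, [/\ idem_elt e, corner p J e, corner e J f &
                             forall t, T t -> e * t = t * e]))
    & (locally_fdss (fun _ : R => True) <->
         (forall f : R, idem_elt f -> corner p J f ->
            exists e : R, [/\ idem_elt e, corner p J e, corner e J f &
                             forall t, T t -> e * t = t * e]))].
Proof.
move=> hJ hJl hT hp hdec.
have AB := a_b hp.
have BC := b_c hJ hT hp.
have CA := c_a hJ hJl hT hp hdec.
split; split => h.
- by apply: AB.
- by apply: CA; apply: BC.
- by apply: BC.
- by apply: AB; apply: CA.
- by apply: BC; apply: AB.
- by apply: CA.
Qed.
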